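(* Let $T=(V,E)$ be a tree with $\mathrm{pthin}(T)=2$, and let $\sigma$ be an ordering of $V$ and $S=\{V^0,V^1\}$ a partition of $V$ that are strongly consistent. Let $v_1,v_2,v_3$ be vertices with $v_1<v_2<v_3$ and $\deg(v_2)\ge 4$. Then there is no vertex $w\notin\{v_1,v_3\}$ adjacent to $v_2$ such that both the unique simple path from $v_2$ to $v_1$ and the unique simple path from $v_2$ to $v_3$ pass through $w$.
   Context: For a graph $G=(V,E)$, a linear ordering $<$ of $V$ and a partition of $V$ into classes are called strongly consistent if for every triple $r<s<t$ of vertices with $rt\in E$: if $r$ and $s$ belong to the same class then $st\in E$, and if $s$ and $t$ belong to the same class then $rs\in E$. The proper thinness $\mathrm{pthin}(G)$ is the minimum $k$ such that some ordering and some partition into $k$ classes are strongly consistent. *)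

(* Defs.v *)
From mathcomp Require Import all_boot.
Set Implicit Arguments. Unset Strict Implicit. Unset Printing Implicit Defensive.

Definition simple_graph (T : finType) (e : rel T) : Prop :=
  symmetric e /\ irreflexive e.

Definition simple_path (T : finType) (e : rel T) (x y : T) (p : seq T) : bool :=
  [&& path e x p, uniq (x :: p) & last x p == y].

Definition has_cycle (T : finType) (e : rel T) : Prop :=
  exists (x : T) (p : seq T),
    [&& path e x p, uniq (x :: p), 2 <= size p & e (last x p) x].

Definition is_tree (T : finType) (e : rel T) : Prop :=
  [/\ simple_graph e, #|T| > 0, (forall x y : T, connect e x y) & ~ has_cycle e].

Definition deg (T : finType) (e : rel T) (v : T) : nat := #|[set u | e v u]|.

(* Linear ordering given by an injective map sigma : T -> nat (r < s iff
   sigma r < sigma s); partition given by a class map c : T -> K. *)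
Definition strongly_consistent (T : finType) (K : eqType) (e : rel T)
    (sigma : T -> nat) (c : T -> K) : Prop :=
  forall r s t : T, sigma r < sigma s -> sigma s < sigma t -> e r t ->
    (c r = c s -> e s t) /\ (c s = c t -> e r s).

(* Some ordering and some partition into (at most) k classes are strongly consistent. *)
Definition has_pthin_partition (T : finType) (e : rel T) (k : nat) : Prop :=
  exists (sigma : T -> nat) (c : T -> 'I_k),
    injective sigma /\ strongly_consistent e sigma c.

Definition pthin_eq (T : finType) (e : rel T) (k : nat) : Prop :=
  has_pthin_partition e k /\ (forall j, j < k -> ~ has_pthin_partition e j).

(* Main.v *)
Require Import Defs.
From mathcomp Require Import all_boot.
Set Implicit Arguments. Unset Strict Implicit. Unset Printing Implicit Defensive.
Lemma prefix_path (T : eqType) (e : rel T) x p z :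
  z \in x :: p -> path e x p -> uniq (x :: p) ->
  exists r, [/\ path e x r, uniq (x :: r), last x r = z & {subset r <= p}].
Proof.
rewrite in_cons => /predU1P [->|zp] pp up.
  by exists [::]; split.
case/path.splitP: zp pp up => p1 p2 pp up.
exists (rcons p1 z); split.
- by move: pp; rewrite cat_path => /andP[].
- by move: up; rewrite -cat_cons cat_uniq => /andP[].
- by rewrite last_rcons.
- by move=> y yin; rewrite mem_cat yin.
Qed.

Lemma crossing (T : eqType) (e : rel T) (s : pred T) x p :
  path e x p -> s x -> ~~ s (last x p) ->
  exists a b, [/\ a \in x :: p, b \in x :: p, e a b, s a & ~~ s b].
Proof.
elim: p x => [|y p IH] x /=; first by move=> _ ->.
case/andP=> exy pp sx sl.
case sy: (s y).
  have [a [b [ain bin eab sa sb]]] := IH y pp sy sl.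
  exists a, b; split => //; rewrite in_cons ?ain ?bin orbT //.
by exists x, y; split; rewrite ?in_cons ?eqxx ?orbT ?sy.
Qed.
Definition SCrel (T : Type) (e lt : rel T) (c : T -> bool) :=
  forall r s t, lt r s -> lt s t -> e r t -> (c r = c s -> e s t) /\ (c s = c t -> e r s).

Lemma SC1 (T : Type) (e lt : rel T) (c : T -> bool) r s t :
  SCrel e lt c -> lt r s -> lt s t -> e r t -> ~~ e s t -> c r != c s.
Proof. by move=> SC h1 h2 h3 h4; apply/eqP => E; have [/(_ E) H _] := SC _ _ _ h1 h2 h3; rewrite H in h4. Qed.

Lemma SC2 (T : Type) (e lt : rel T) (c : T -> bool) r s t :
  SCrel e lt c -> lt r s -> lt s t -> e r t -> ~~ e r s -> c s != c t.
Proof. by move=> SC h1 h2 h3 h4; apply/eqP => E; have [_ /(_ E) H] := SC _ _ _ h1 h2 h3; rewrite H in h4. Qed.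

Lemma pair_contra (T : eqType) (e lt : rel T) (c : T -> bool)
  (esym : symmetric e) (tot : forall x y, x != y -> lt x y || lt y x)
  (SC : SCrel e lt c) v u u' :
  u != u' -> e v u -> e v u' -> ~~ e u u' -> c u = c v -> c u' = c v ->
  (lt u v && lt u' v) || (lt v u && lt v u') -> False.
Proof.
move=> nuu' evu evu' nuu cu cu' H.
have nuu2 : ~~ e u' u by rewrite esym.
have euv : e u v by rewrite esym.
have eu'v : e u' v by rewrite esym.
case/orP: (tot _ _ nuu') => l.
- case/orP: H => /andP[l1 l2].
  + have := SC2 SC l l2 euv nuu. by rewrite cu' eqxx.
  + have := SC1 SC l1 l evu' nuu. by rewrite cu eqxx.
- case/orP: H => /andP[l1 l2].
  + have := SC2 SC l l1 eu'v nuu2. by rewrite cu eqxx.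
  + have := SC1 SC l2 l evu nuu2. by rewrite cu' eqxx.
Qed.

Lemma pigeon (T : eqType) (lt : rel T) (tot : forall x y, x != y -> lt x y || lt y x)
  v u1 u2 u3 (P : T -> T -> Prop) :
  u1 != v -> u2 != v -> u3 != v ->
  (forall x y, (lt x v && lt y v) || (lt v x && lt v y) -> P x y) ->
  P u1 u2 \/ P u1 u3 \/ P u2 u3.
Proof.
move=> n1 n2 n3 H.
case/orP: (tot _ _ n1) => l1; case/orP: (tot _ _ n2) => l2; case/orP: (tot _ _ n3) => l3;
 first [ by left; apply: H; rewrite ?l1 ?l2 ?l3 ?orbT
       | by right; left; apply: H; rewrite ?l1 ?l2 ?l3 ?orbT
       | by right; right; apply: H; rewrite ?l1 ?l2 ?l3 ?orbT ].
Qed.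

Lemma bool3 (x y z : bool) : x != z -> y != x -> y = z.
Proof. by case: x; case: y; case: z. Qed.

Lemma lemA (T : eqType) (e lt : rel T) (c : T -> bool)
  (esym : symmetric e) (eirr : irreflexive e)
  (tot : forall x y, x != y -> lt x y || lt y x)
  (SC : SCrel e lt c) v a b u1 u2 u3 :
  u1 != u2 -> u1 != u3 -> u2 != u3 -> e v u1 -> e v u2 -> e v u3 ->
  ~~ e u1 u2 -> ~~ e u1 u3 -> ~~ e u2 u3 ->
  ~~ e u1 a -> ~~ e u2 a -> ~~ e u3 a -> ~~ e u1 b -> ~~ e u2 b -> ~~ e u3 b ->
  ~~ e v a -> ~~ e v b -> e a b -> lt a v -> lt v b -> False.
Proof.
move=> n12 n13 n23 e1 e2 e3 ne12 ne13 ne23 na1 na2 na3 nb1 nb2 nb3 nva nvb eab lav lvb.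
have ca : c a != c v.
  by apply/eqP => E; have := SC1 SC lav lvb eab nvb; rewrite E eqxx.
have cb : c b != c v.
  have eba : e b a by rewrite esym.
  have nav : ~~ e a v by rewrite esym.
  by apply/eqP => E; have := SC2 SC lav lvb eab nav; rewrite E eqxx.
have col : forall u, e v u -> ~~ e u a -> ~~ e u b -> c u = c v.
  move=> u evu nua nub.
  have ua : u != a by apply: contraNneq nva => <-.
  have ub : u != b by apply: contraNneq nvb => <-.
  have euv : e u v by rewrite esym.
  have nav : ~~ e a v by rewrite esym.
  case/orP: (tot _ _ ua) => l1.
    by apply: (bool3 ca); apply: SC1 SC l1 lav euv nav.
  case/orP: (tot _ _ ub) => l2.
    by apply: (bool3 ca); rewrite eq_sym; apply: SC1 SC l1 l2 eab nub.
  by apply: (bool3 cb); rewrite eq_sym; apply: SC2 SC lvb l2 evu nvb.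
have nv : forall u, e v u -> u != v by move=> u evu; apply: contraTneq evu => ->; rewrite eirr.
have c1 := col _ e1 na1 nb1; have c2 := col _ e2 na2 nb2; have c3 := col _ e3 na3 nb3.
have [H|[H|H]] := pigeon tot (P := fun x y => x != y -> e v x -> e v y -> ~~ e x y -> c x = c v -> c y = c v -> False)
   (nv _ e1) (nv _ e2) (nv _ e3)
   (fun x y H n ex ey nxy cx cy => pair_contra esym tot SC n ex ey nxy cx cy H); by apply: H.
Qed.

Lemma lemB_core (T : eqType) (e lt : rel T) (c : T -> bool)
  (esym : symmetric e) (ltT : transitive lt)
  (tot : forall x y, x != y -> lt x y || lt y x)
  (SC : SCrel e lt c) v w b x p q :
  e v w -> e w b -> e w x -> ~~ e v b -> ~~ e v x -> ~~ e x b -> lt w v -> lt v b -> lt x v -> x != w ->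
  lt p q -> lt q v -> e v p -> e v q -> ~~ e p q -> ~~ e q b -> ~~ e q w -> ~~ e q x -> q != w -> False.
Proof.
move=> evw ewb ewx nvb nvx nxb lwv lvb lxv xw lpq lqv evp evq npq nqb nqw nqx qw.
have cw : c w != c v by apply: SC1 SC lwv lvb ewb nvb.
have epv : e p v by rewrite esym.
have eqv : e q v by rewrite esym.
have cq : c q != c v by apply: SC2 SC lpq lqv epv npq.
case/orP: (tot _ _ qw) => l1; last first.
  have := SC1 SC l1 (ltT _ _ _ lqv lvb) ewb nqb.
  by move: cw cq; case: (c w); case: (c q); case: (c v).
case/orP: (tot _ _ xw) => l2.
  have qx : q != x by apply: contraNneq nvx => <-.
  have exw : e x w by rewrite esym.
  have nxq : ~~ e x q by rewrite esym.
  have nxv : ~~ e x v by rewrite esym.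
  case/orP: (tot _ _ qx) => l3.
    have h1 := SC1 SC l3 lxv eqv nxv.
    have h2 := SC2 SC l3 lxv eqv nqx.
    by move: cw cq h1 h2; case: (c w); case: (c q); case: (c v); case: (c x).
  have := SC2 SC l3 l1 exw nxq.
  by move: cw cq; case: (c w); case: (c q); case: (c v).
have h1 := SC1 SC l2 (ltT _ _ _ lxv lvb) ewb nxb.
have h2 := SC2 SC (ltT _ _ _ l1 l2) lxv eqv nqx.
by move: cw h1 h2; case: (c w); case: (c x); case: (c v).
Qed.

Lemma lemB (T : eqType) (e lt : rel T) (c : T -> bool)
  (esym : symmetric e) (eirr : irreflexive e) (ltT : transitive lt)
  (tot : forall x y, x != y -> lt x y || lt y x)
  (SC : SCrel e lt c) v w b x u1 u2 u3 :
  e v w -> e w b -> e w x -> ~~ e v b -> ~~ e v x -> ~~ e x b -> lt w v -> lt v b -> lt x v -> x != w ->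
  u1 != u2 -> u1 != u3 -> u2 != u3 ->
  ~~ e u1 u2 -> ~~ e u1 u3 -> ~~ e u2 u3 ->
  (forall u, u \in [:: u1; u2; u3] -> [&& e v u, ~~ e u w, ~~ e u x, ~~ e u b & u != w]) -> False.
Proof.
move=> evw ewb ewx nvb nvx nxb lwv lvb lxv xw n12 n13 n23 ne12 ne13 ne23 good.
have cw : c w != c v by apply: SC1 SC lwv lvb ewb nvb.
have colR : forall u, e v u -> lt v u -> ~~ e u b -> c u = c v.
  move=> u evu lvu nub.
  have ub : u != b by apply: contraNneq nvb => <-.
  case/orP: (tot _ _ ub) => l.
    have := SC1 SC (ltT _ _ _ lwv lvu) l ewb nub.
    by move: cw; case: (c w); case: (c u); case: (c v).
  have nbu : ~~ e b u by rewrite esym.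
  have h1 := SC1 SC lvb l evu nbu.
  have h2 := SC2 SC lvb l evu nvb.
  by move: h1 h2; case: (c b); case: (c u); case: (c v).
have nv : forall u, e v u -> u != v by move=> u evu; apply: contraTneq evu => ->; rewrite eirr.
have g1 := good u1 (mem_head _ _).
have g2 : [&& e v u2, ~~ e u2 w, ~~ e u2 x, ~~ e u2 b & u2 != w].
  by apply: good; rewrite !inE eqxx orbT.
have g3 : [&& e v u3, ~~ e u3 w, ~~ e u3 x, ~~ e u3 b & u3 != w].
  by apply: good; rewrite !inE eqxx !orbT.
have P : forall y z, (lt y v && lt z v) || (lt v y && lt v z) ->
   y != z -> [&& e v y, ~~ e y w, ~~ e y x, ~~ e y b & y != w] ->
   [&& e v z, ~~ e z w, ~~ e z x, ~~ e z b & z != w] -> ~~ e y z -> False.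
  move=> y z H yz /and5P[evy nyw nyx nyb yw] /and5P[evz nzw nzx nzb zw] nyz.
  case/orP: H => /andP[ly lz].
    case/orP: (tot _ _ yz) => l.
      exact: (lemB_core esym ltT tot SC evw ewb ewx nvb nvx nxb lwv lvb lxv xw l lz evy evz nyz nzb nzw nzx zw).
    have nzy : ~~ e z y by rewrite esym.
    exact: (lemB_core esym ltT tot SC evw ewb ewx nvb nvx nxb lwv lvb lxv xw l ly evz evy nzy nyb nyw nyx yw).
  apply: (pair_contra esym tot SC yz evy evz nyz (colR _ evy ly nyb) (colR _ evz lz nzb)).
  by rewrite ly lz orbT.
have [H|[H|H]] := pigeon tot (P := fun y z => y != z ->
   [&& e v y, ~~ e y w, ~~ e y x, ~~ e y b & y != w] ->
   [&& e v z, ~~ e z w, ~~ e z x, ~~ e z b & z != w] -> ~~ e y z -> False)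
  (nv _ (proj1 (andP g1))) (nv _ (proj1 (andP g2))) (nv _ (proj1 (andP g3))) P; by apply: H.
Qed.

Lemma no_cyc (T : finType) (e : rel T) (esym : symmetric e) (nocyc : ~ has_cycle e) x p u :
  path e x p -> uniq (x :: p) -> p != [::] -> u \notin x :: p -> e u x -> e u (last x p) -> False.
Proof.
move=> pp up pn ux eux eul; apply: nocyc; exists u, (x :: p).
apply/and4P; split.
- by rewrite /= eux.
- by rewrite /= ux.
- by move: pn; rewrite /= ltnS lt0n size_eq0.
- by rewrite /= esym.
Qed.

Lemma triangle (T : finType) (e : rel T) (esym : symmetric e) (nocyc : ~ has_cycle e) x y u :
  x != y -> u != x -> u != y -> e u x -> e u y -> ~~ e x y.
Proof.
move=> xy ux uy eux euy; apply/negP => exy.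
apply: (@no_cyc _ _ esym nocyc x [:: y] u) => //=.
- by rewrite exy.
- by rewrite inE xy.
- by rewrite !inE negb_or ux uy.
Qed.

Lemma sub_cons (T : eqType) (w : T) r q : {subset r <= q} -> {subset w :: r <= w :: q}.
Proof. by move=> s y; rewrite !inE => /orP[->|/s ->]; rewrite ?orbT. Qed.

Lemma Xa (T : finType) (e : rel T) (esym : symmetric e) (nocyc : ~ has_cycle e) v w q u :
  path e w q -> uniq (w :: q) -> v \notin w :: q -> e v w -> e v u -> u != w -> u \notin w :: q.
Proof.
move=> pq uq vq evw evu uw; apply/negP => uin.
have [r [pr ur lr sr]] := prefix_path uin pq uq.
apply: (@no_cyc _ _ esym nocyc w r v pr ur) => //.
- by apply: contraNneq uw => rn; move: lr; rewrite rn /= => ->.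
- by apply: contra vq; apply: sub_cons.
- by rewrite lr.
Qed.

Lemma Xc (T : finType) (e : rel T) (esym : symmetric e) (nocyc : ~ has_cycle e) v w q z :
  path e w q -> uniq (w :: q) -> v \notin w :: q -> e v w -> z \in w :: q -> z != w -> ~~ e v z.
Proof.
move=> pq uq vq evw zin zw; apply/negP => evz.
have [r [pr ur lr sr]] := prefix_path zin pq uq.
apply: (@no_cyc _ _ esym nocyc w r v pr ur) => //.
- by apply: contraNneq zw => rn; move: lr; rewrite rn /= => ->.
- by apply: contra vq; apply: sub_cons.
- by rewrite lr.
Qed.

Lemma Xb (T : finType) (e : rel T) (esym : symmetric e) (eirr : irreflexive e)
  (nocyc : ~ has_cycle e) v w q z u :
  path e w q -> uniq (w :: q) -> v \notin w :: q -> e v w -> z \in w :: q -> e v u -> u != w ->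
  ~~ e u z.
Proof.
move=> pq uq vq evw zin evu uw; apply/negP => euz.
have uq' := Xa esym nocyc pq uq vq evw evu uw.
have [r [pr ur lr sr]] := prefix_path zin pq uq.
have ur' : u \notin w :: r by apply: contra uq'; apply: sub_cons.
have vr : v \notin w :: r by apply: contra vq; apply: sub_cons.
apply: (@no_cyc _ _ esym nocyc w (rcons r u) v).
- by rewrite rcons_path pr lr esym.
- by rewrite -rcons_cons rcons_uniq ur' ur.
- by case: (r).
- rewrite -rcons_cons mem_rcons inE negb_or vr andbT.
  by apply: contraTneq evu => ->; rewrite eirr.
- exact: evw.
- by rewrite last_rcons.
Qed.

Lemma starts_w (T : finType) (e : rel T) (esym : symmetric e) (nocyc : ~ has_cycle e) v w p :
  path e v p -> uniq (v :: p) -> w \in p -> e v w -> p = w :: behead p.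
Proof.
case: p => [//|h q] /= /andP[evh pq] /andP[vhq uq] win evw.
case hw: (h == w); first by rewrite (eqP hw).
move: win; rewrite inE eq_sym hw /= => win.
have win' : w \in h :: q by rewrite inE win orbT.
have [r [pr ur lr sr]] := prefix_path win' pq uq.
exfalso; apply: (@no_cyc _ _ esym nocyc h r v pr ur) => //.
- by apply: contraFneq hw => rn; move: lr; rewrite rn /= => ->.
- by apply: contra vhq; apply: sub_cons.
- by rewrite lr.
Qed.

Lemma get_path (T : finType) (e : rel T) v y :
  connect e v y -> exists p, [/\ path e v p, uniq (v :: p) & last v p = y].
Proof.
case/connectP => p pp ->.
case/shortenP: pp => p' pp' up' _.
by exists p'.
Qed.

Theorem propositionA6 (T : finType) (e : rel T) (sigma : T -> nat) (c : T -> bool)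
    (v1 v2 v3 : T) :
  is_tree e -> pthin_eq e 2 ->
  injective sigma -> strongly_consistent e sigma c ->
  sigma v1 < sigma v2 -> sigma v2 < sigma v3 -> 4 <= deg e v2 ->
  ~ (exists w : T,
       [/\ w != v1, w != v3, e v2 w,
           (forall p, simple_path e v2 v1 p -> w \in p) &
           (forall p, simple_path e v2 v3 p -> w \in p)]).
Proof.
move=> [[esym eirr] _ conn nocyc] _ inj SC l12 l23 dg [w [wv1 wv3 ev2w P1 P3]].
pose lt := fun x y => sigma x < sigma y.
have SCl : SCrel e lt c := SC.
have SCf : SCrel e (fun x y => lt y x) c.
  move=> r s t h1 h2 h3; have [A B] := SC t s r h2 h1 ltac:(by rewrite esym).
  by split=> E; rewrite esym; [apply: B | apply: A].
have tot : forall x y, x != y -> lt x y || lt y x.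
  by move=> x y xy; rewrite /lt -neq_ltn; apply: contra xy => /eqP/inj ->.
have totf : forall x y, x != y -> lt y x || lt x y by move=> x y /tot; rewrite orbC.
have ltT : transitive lt by move=> y x z; apply: ltn_trans.
have ltTf : transitive (fun x y => lt y x) by move=> y x z h1 h2; apply: ltn_trans h2 h1.
have getq : forall y, y != v2 -> (forall p, simple_path e v2 y p -> w \in p) -> y != w ->
    exists h t, [/\ path e w (h :: t), uniq (v2 :: w :: h :: t) & last h t = y].
  move=> y yv2 Py yw.
  have [p [pp up lp]] := get_path (conn v2 y).
  have wp : w \in p by apply: Py; rewrite /simple_path pp up lp eqxx.
  have pw := starts_w esym nocyc pp up wp ev2w.
  move: pp up lp; rewrite pw /=; case: (behead p) => [|h t] /=.
    by move=> _ _ E; rewrite E eqxx in yw.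
  by move=> /andP[_ pp] up lp; exists h, t.
have v1v2 : v1 != v2 by apply: contraTneq l12 => ->; rewrite ltnn.
have v3v2 : v3 != v2 by apply: contraTneq l23 => ->; rewrite ltnn.
have [h1 [t1 [pq1 uq1 lq1]]] := getq v1 v1v2 P1 ltac:(by rewrite eq_sym).
have [h3 [t3 [pq3 uq3 lq3]]] := getq v3 v3v2 P3 ltac:(by rewrite eq_sym).
case/andP: uq1 => vq1 uq1; case/andP: uq3 => vq3 uq3.
set S := [set u | e v2 u] :\ w.
have S3 : 2 < #|S|.
  by move: dg; rewrite /deg (cardsD1 w) inE ev2w add1n ltnS.
have [u1 u1S] : exists u1, u1 \in S by apply/set0Pn; rewrite -card_gt0 (leq_trans _ S3).
have S2 : 1 < #|S :\ u1| by move: S3; rewrite (cardsD1 u1) u1S add1n ltnS.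
have [u2 u2S] : exists u2, u2 \in S :\ u1 by apply/set0Pn; rewrite -card_gt0 (leq_trans _ S2).
have S1 : 0 < #|S :\ u1 :\ u2| by move: S2; rewrite (cardsD1 u2) u2S add1n ltnS.
have [u3 u3S] : exists u3, u3 \in S :\ u1 :\ u2 by apply/set0Pn; rewrite -card_gt0.
move: u1S u2S u3S; rewrite !in_setD1 !inE.
move=> /andP[u1w e1] /and3P[u21 u2w e2] /and4P[u32 u31 u3w e3].
pose inX z := (z \in w :: h1 :: t1) || (z \in w :: h3 :: t3).
have nu : forall u z, e v2 u -> u != w -> inX z -> ~~ e u z.
  move=> u z evu uw /orP[zi|zi].
    exact: (Xb esym eirr nocyc pq1 uq1 vq1 ev2w zi evu uw).
  exact: (Xb esym eirr nocyc pq3 uq3 vq3 ev2w zi evu uw).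
have nv : forall z, inX z -> z != w -> ~~ e v2 z.
  move=> z /orP[zi|zi] zw.
    exact: (Xc esym nocyc pq1 uq1 vq1 ev2w zi zw).
  exact: (Xc esym nocyc pq3 uq3 vq3 ev2w zi zw).
have zv : forall z, inX z -> z != v2.
  move=> z /orP[zi|zi]; apply/eqP => E; [move: vq1 | move: vq3]; by rewrite -E zi.
have v2u : forall u, e v2 u -> v2 != u by move=> u evu; apply: contraTneq evu => <-; rewrite eirr.
have ne12 : ~~ e u1 u2 by apply: (triangle esym nocyc) (v2u _ e1) (v2u _ e2) e1 e2; rewrite eq_sym.
have ne13 : ~~ e u1 u3 by apply: (triangle esym nocyc) (v2u _ e1) (v2u _ e3) e1 e3; rewrite eq_sym.
have ne23 : ~~ e u2 u3 by apply: (triangle esym nocyc) (v2u _ e2) (v2u _ e3) e2 e3; rewrite eq_sym.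
have n12 : u1 != u2 by rewrite eq_sym.
have n13 : u1 != u3 by rewrite eq_sym.
have n23 : u2 != u3 by rewrite eq_sym.
have caseA : forall a b, inX a -> inX b -> a != w -> b != w -> e a b -> lt a v2 -> lt v2 b -> False.
  move=> a b Xa' Xb' aw bw eab lav lvb.
  exact: (lemA esym eirr tot SCl n12 n13 n23 e1 e2 e3 ne12 ne13 ne23
     (nu _ _ e1 u1w Xa') (nu _ _ e2 u2w Xa') (nu _ _ e3 u3w Xa')
     (nu _ _ e1 u1w Xb') (nu _ _ e2 u2w Xb') (nu _ _ e3 u3w Xb')
     (nv _ Xa' aw) (nv _ Xb' bw) eab lav lvb).
have sideR : forall z, inX z -> ~~ lt z v2 -> lt v2 z.
  by move=> z Xz; case/orP: (tot _ _ (zv _ Xz)) => ->.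
have X1 : forall z, z \in h1 :: t1 -> inX z /\ z != w.
  move=> z zi; split; first by rewrite /inX inE zi orbT.
  by move: uq1 => /andP[wn _]; apply: contraNneq wn => <-.
have X3 : forall z, z \in h3 :: t3 -> inX z /\ z != w.
  move=> z zi; split; first by apply/orP; right; rewrite inE zi orbT.
  by move: uq3 => /andP[wn _]; apply: contraNneq wn => <-.
have pt1 : path e h1 t1 by move: pq1 => /andP[].
have pt3 : path e h3 t3 by move: pq3 => /andP[].
case s1 : (lt h1 v2); last first.
have [a [b [ai bi eab sa sb]]] := crossing (s := fun z => ~~ lt z v2) pt1 (negbT s1)
   ltac:(by rewrite lq1 negbK).
have [Xa' aw] := X1 _ ai; have [Xb' bw] := X1 _ bi.
apply: (caseA b a Xb' Xa' bw aw); first by rewrite esym.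
  by rewrite negbK in sb.
exact: sideR.
case s3 : (lt h3 v2).
  have [a [b [ai bi eab sa sb]]] := crossing (s := fun z => lt z v2) pt3 s3
     ltac:(by rewrite lq3 /lt -leqNgt ltnW).
  have [Xa' aw] := X3 _ ai; have [Xb' bw] := X3 _ bi.
  exact: (caseA a b Xa' Xb' aw bw eab sa (sideR _ Xb' sb)).
have [Xh1 h1w] := X1 _ (mem_head _ _).
have [Xh3 h3w] := X3 _ (mem_head _ _).
have lvh3 : lt v2 h3 by apply: sideR => //; rewrite s3.
have ewh1 : e w h1 by move: pq1 => /andP[].
have ewh3 : e w h3 by move: pq3 => /andP[].
have h13 : h1 != h3 by apply: contraTneq s1 => ->; rewrite s3.
have wh1 : w != h1 by rewrite eq_sym.
have wh3 : w != h3 by rewrite eq_sym.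
have nh13 : ~~ e h1 h3 := triangle esym nocyc h13 wh1 wh3 ewh1 ewh3.
have nh31 : ~~ e h3 h1 by rewrite esym.
have Xw : inX w by rewrite /inX mem_head.
have good : forall u, u \in [:: u1; u2; u3] -> [&& e v2 u, ~~ e u w, ~~ e u h1, ~~ e u h3 & u != w].
  move=> u; rewrite !inE => /or3P[] /eqP ->.
  - by rewrite e1 (nu _ _ e1 u1w Xw) (nu _ _ e1 u1w Xh1) (nu _ _ e1 u1w Xh3) u1w.
  - by rewrite e2 (nu _ _ e2 u2w Xw) (nu _ _ e2 u2w Xh1) (nu _ _ e2 u2w Xh3) u2w.
  - by rewrite e3 (nu _ _ e3 u3w Xw) (nu _ _ e3 u3w Xh1) (nu _ _ e3 u3w Xh3) u3w.
have good' : forall u, u \in [:: u1; u2; u3] -> [&& e v2 u, ~~ e u w, ~~ e u h3, ~~ e u h1 & u != w].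
  by move=> u /good /and5P[-> -> -> -> ->].
have wv2 : w != v2 by apply: zv.
case/orP: (tot _ _ wv2) => lw.
  exact: (lemB esym eirr ltT tot SCl ev2w ewh3 ewh1 (nv _ Xh3 h3w) (nv _ Xh1 h1w) nh13
            lw lvh3 s1 h1w n12 n13 n23 ne12 ne13 ne23 good).
exact: (lemB esym eirr ltTf totf SCf ev2w ewh1 ewh3 (nv _ Xh1 h1w) (nv _ Xh3 h3w) nh31
          lw s1 lvh3 h3w n12 n13 n23 ne12 ne13 ne23 good').
Qed.
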